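(* Fix $1\le r<\infty$, $d\in\mathbb{N}$ and $\varepsilon>0$. Let $a=\lceil(32/\varepsilon+2)^r\rceil$, $k_j=a^{j-1}$, and $Q=\{k_{2j}\}_{j=1}^\infty$. Then for all $\bar m\in[Q]^d$, all $k\in Q$ with $k>m_d$, and all step preserving maps $F\colon S^+_{\ell_\infty^k}\to S^+_{\ell_r^k}$ with $\omega_F(\tfrac1d)\le\tfrac\varepsilon8$, we have \[\Big\|F(z(\bar m))-\frac1{k^{1/r}}\sum_{i=1}^ke_i\Big\|_r\le\varepsilon,\] where $(e_i)_{i=1}^k$ is the standard basis of $\mathbb{R}^k$.
   Context: $S^+_{\ell_p^k}=\{x\in\mathbb{R}^k:\|x\|_p=1,\ x_i\ge0\ \forall i\}$. $[Q]^d$ is the set of increasing $d$-tuples from $Q$; with $m_0=0$, $z(\bar m)=\sum_{s=1}^d(1-\frac{s-1}{d})1_{(m_{s-1},m_s]}$, where $1_{(a,b]}$ is the indicator vector of $\{i:a<i\le b\}$. $F=(F_i)$ is step preserving if $x_i=x_j$ implies $F_i(x)=F_j(x)$. $\omega_F(t)=\sup\{\|F(x)-F(y)\|_r:\|x-y\|_\infty\le t\}$. *)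

(* Defs.v *)
From HB Require Import structures.
From mathcomp Require Import all_boot all_order all_algebra.
From mathcomp Require Import all_classical all_reals all_analysis.
Set Implicit Arguments. Unset Strict Implicit. Unset Printing Implicit Defensive.
Import Order.TTheory GRing.Theory Num.Theory.
Local Open Scope ring_scope.
Local Open Scope classical_set_scope.

Section Defs.
Variable R : realType.

Definition lpnorm (p : R) (k : nat) (x : 'I_k -> R) : R :=
  (\sum_(i < k) `|x i| `^ p) `^ p^-1.

Definition linfnorm (k : nat) (x : 'I_k -> R) : R :=
  \big[Num.max/0]_(i < k) `|x i|.

Definition Splus_lp (p : R) (k : nat) : set ('I_k -> R) :=
  [set x | lpnorm p x = 1 /\ forall i, 0 <= x i].
Definition Splus_linf (k : nat) : set ('I_k -> R) :=
  [set x | linfnorm x = 1 /\ forall i, 0 <= x i].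

Definition step_preserving (k : nat) (D : set ('I_k -> R))
  (F : ('I_k -> R) -> ('I_k -> R)) : Prop :=
  forall x, D x -> forall i j, x i = x j -> F x i = F x j.

Definition omegaF (r : R) (k : nat) (F : ('I_k -> R) -> ('I_k -> R)) (t : R)
  : \bar R :=
  ereal_sup [set e | exists x y, @Splus_linf k x /\ @Splus_linf k y /\
              linfnorm (fun i => x i - y i) <= t /\
              e = (lpnorm r (fun i => F x i - F y i))%:E].

(* the vector z(m) in R^k, m = (m_1,...,m_d), m_0 = 0; coordinate i : 'I_k
   is the (i+1)-th coordinate; s : 'I_d is the (s+1)-th summand *)
Definition zvec (k d : nat) (m : seq nat) : 'I_k -> R :=
  fun i => \sum_(s < d)
     (1 - (s%:R / d%:R)) * ((nth 0%N (0%N :: m) s < i.+1 <= nth 0%N m s)%N)%:R.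
End Defs.

Definition kseq (a j : nat) : nat := (a ^ (j - 1))%N.
Definition Qset (a : nat) : nat -> Prop :=
  fun n => exists j, (1 <= j)%N /\ n = kseq a (2 * j).

(* Main.v *)
Require Import Defs.
From HB Require Import structures.
From mathcomp Require Import all_boot all_order all_algebra.
From mathcomp Require Import all_classical all_reals all_analysis.
From mathcomp.algebra_tactics Require Import ring lra.
From mathcomp Require Import zify.
Import Order.TTheory GRing.Theory Num.Theory.

Lemma count_iota_int lo hi n : lo <= hi -> hi <= n ->
  count (fun i => (lo <= i) && (i < hi)) (iota 0 n) = hi - lo.
Proof.
move=> h1 h2.
rewrite -(subnKC h2) iotaD count_cat add0n.
rewrite (@eq_in_count _ _ pred0 (iota hi (n - hi))); last first.
  move=> i; rewrite mem_iota /= => H; apply/negP => /andP[? ?]; lia.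
rewrite count_pred0 addn0 -(subnKC h1) iotaD count_cat.
rewrite (@eq_in_count _ _ pred0 (iota 0 lo)); last first.
  move=> i; rewrite mem_iota /= => H; apply/negP => /andP[? ?]; lia.
rewrite count_pred0 add0n.
rewrite (@eq_in_count _ _ predT (iota lo (hi - lo))); last first.
  move=> i; rewrite mem_iota /= => H; apply/andP; split; lia.
by rewrite count_predT size_iota subnKC.
Qed.

Lemma card_int k lo hi : lo <= hi -> hi <= k ->
  #|[pred i : 'I_k | (lo <= i) && (i < hi)]| = hi - lo.
Proof.
move=> h1 h2; rewrite -sum1_card.
rewrite (eq_bigl (fun i : 'I_k => (lo <= i) && (i < hi))) //.
rewrite -(big_mkord (fun i => (lo <= i) && (i < hi)) (fun _ => 1)).
by rewrite /index_iota subn0 sum1_count count_iota_int.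
Qed.

Section Comb.
Variables (d k : nat) (m : seq nat).
Hypothesis sz : size m = d.
Hypothesis srt : sorted ltn m.
Hypothesis d0 : 0 < d.
Hypothesis mk : nth 0 m d.-1 < k.

Definition MM s := nth k m s.
Definition blk (i : nat) := find (fun t => i < t) m.

Lemma M_lt s : s < d -> MM s < MM s.+1.
Proof.
move=> hs; rewrite /MM.
have [h|h] := ltnP s.+1 d.
  apply: (sorted_ltn_nth ltn_trans k srt); rewrite ?inE ?sz //; lia.
rewrite (nth_default k (s := m) (n := s.+1)); last by rewrite sz.
have -> : s = d.-1 by lia.
by rewrite (set_nth_default 0) // sz; lia.
Qed.

Lemma M_mono s t : s <= t -> MM s <= MM t.
Proof.
move=> hst; apply: (@homo_leq _ MM (fun a b => a <= b)) hst => //.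
  by move=> ? ? ?; apply: leq_trans.
move=> i; have [h|h] := ltnP i d; first by apply: ltnW; apply: M_lt.
by rewrite /MM !nth_default ?sz //; lia.
Qed.

Lemma MMd : MM d = k.
Proof. by rewrite /MM nth_default ?sz. Qed.

Lemma blk_le i : blk i <= d.
Proof. by rewrite -sz find_size. Qed.

Lemma blk_lt i : i < k -> i < MM (blk i).
Proof.
move=> hi; rewrite /MM /blk.
case: (boolP (has (fun t => i < t) m)) => h; first exact: (nth_find k h).
by rewrite (hasNfind h) nth_default.
Qed.

Lemma blk_ge i s : s < blk i -> MM s <= i.
Proof. move=> h; have := before_find k h; rewrite /MM => H. rewrite leqNgt H. by []. Qed.

Arguments blk_ge {i s}.
Arguments blk_lt {i}.
Arguments M_lt {s}.
Arguments M_mono {s t}.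

Lemma blk_int i s : s < d -> MM s <= i -> i < MM s.+1 -> blk i = s.+1.
Proof.
move=> hs h1 h2; apply/eqP; rewrite eqn_leq; apply/andP; split.
  rewrite leqNgt; apply/negP => H; have := blk_ge H; lia.
rewrite ltnNge; apply/negP => H.
have h3 : i < k by have := M_mono hs; rewrite MMd; lia.
have := blk_lt h3; have := M_mono H; lia.
Qed.

Lemma blk_head i : i < k -> blk i < d -> i < MM d.-1.
Proof.
move=> hi hb; have := blk_lt hi; have := @M_mono (blk i) d.-1 ltac:(lia); lia.
Qed.

Arguments blk_head {i}.

Lemma blk_tail : blk (MM d.-1) = d.
Proof.
apply/eqP; rewrite eqn_leq blk_le /= leqNgt; apply/negP => hb.
have hk : MM d.-1 < k by rewrite /MM (set_nth_default 0) ?sz //; lia.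
have := blk_head hk hb; lia.
Qed.

Lemma blk_0 : 0 < MM 0 -> blk 0 = 0.
Proof.
move=> h; apply/eqP; rewrite -leqn0 leqNgt; apply/negP => H.
have := blk_ge H; lia.
Qed.

Lemma ind_blk i s : i < k -> s < d ->
  ((nth 0 (0 :: m) s < i.+1) && (i.+1 <= nth 0 m s)) = (s == blk i).
Proof.
move=> hi hs.
have E1 : nth 0 m s = MM s by rewrite /MM (set_nth_default k) ?sz.
rewrite E1.
have [h|h|h] := ltngtP s (blk i).
- have := blk_ge h; lia.
- case: s hs h E1 => [|s] hs h E1; first by [].
  rewrite /= (set_nth_default k) ?sz; last lia.
  have := blk_lt hi; have := @M_mono (blk i) s ltac:(lia); rewrite -/(MM s); lia.
- have := blk_lt hi; rewrite -h => h2; rewrite h2 andbT.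
  case: s hs h h2 E1 => [|s] hs h h2 E1 //=.
  rewrite (set_nth_default k) ?sz; last lia.
  rewrite ltnS; apply: blk_ge; lia.
Qed.

End Comb.


Definition gf (p s : nat) : nat := if s < p then s else (s - p) %/ 2 * 2 + p.
Definition Ef (d p s : nat) : bool := [&& p <= s, (s - p) %% 2 == 0 & s < d].

Lemma gf_le p s : p <= 1 -> gf p s <= s.
Proof. by rewrite /gf; case: ifP => h; lia. Qed.
Lemma gf_ge p s : p <= 1 -> s <= (gf p s).+1.
Proof. by rewrite /gf; case: ifP => h; lia. Qed.
Lemma gf_0 p : gf p 0 = 0.
Proof. by rewrite /gf; case: ifP => h; lia. Qed.
Lemma gf_E d p s : p <= 1 -> Ef d p s -> gf p s.+1 = gf p s.
Proof. by rewrite /gf /Ef => hp; do 2 case: ifP => ?; lia. Qed.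
Lemma Ef_lt d p s : Ef d p s -> s < d.
Proof. by rewrite /Ef; lia. Qed.
Lemma Ef_cover d s : (Ef d 0 s || Ef d 1 s) = (s < d).
Proof. by rewrite /Ef; apply/idP/idP; lia. Qed.
Lemma Ef_disj d s : ~~ (Ef d 0 s && Ef d 1 s).
Proof. by rewrite /Ef; lia. Qed.

Local Open Scope ring_scope.
Local Open Scope classical_set_scope.

Section LP.
Variable R : realType.
Variable p : R.
Hypothesis hp : 1 <= p.

Let p0 : 0 < p. Proof. exact: lt_le_trans ltr01 hp. Qed.

Lemma lp_ge0 k (x : 'I_k -> R) : 0 <= lpnorm p x.
Proof. exact: powR_ge0. Qed.

Lemma lp_powp k (x : 'I_k -> R) : lpnorm p x `^ p = \sum_(i < k) `|x i| `^ p.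
Proof.
rewrite /lpnorm -powRrM mulVf ?gt_eqF // powRr1 //.
by apply: sumr_ge0 => i _; exact: powR_ge0.
Qed.

Lemma lp_mono k (x y : 'I_k -> R) : (forall i, `|x i| <= `|y i|) ->
  lpnorm p x <= lpnorm p y.
Proof.
move=> H; rewrite /lpnorm; apply: ge0_ler_powR.
- by rewrite invr_ge0 ltW.
- by rewrite nnegrE; apply: sumr_ge0 => i _; exact: powR_ge0.
- by rewrite nnegrE; apply: sumr_ge0 => i _; exact: powR_ge0.
apply: ler_sum => i _; apply: ge0_ler_powR => //; first exact: ltW.
Qed.

Lemma lp_scale k c (x : 'I_k -> R) :
  lpnorm p (fun i => c * x i) = `|c| * lpnorm p x.
Proof.
rewrite /lpnorm.
under eq_bigr do rewrite normrM powRM //.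
rewrite -mulr_sumr powRM ?powR_ge0 //; last first.
  by apply: sumr_ge0 => i _; exact: powR_ge0.
by rewrite -powRrM mulfV ?gt_eqF // powRr1.
Qed.

Lemma lp_eq0 k (x : 'I_k -> R) : lpnorm p x = 0 -> forall i, x i = 0.
Proof.
move=> H i.
have S0 : \sum_(i < k) `|x i| `^ p = 0.
  by rewrite -lp_powp H powR0 // gt_eqF.
have := @psumr_eq0P _ _ predT (fun i => `|x i| `^ p) (fun i _ => powR_ge0 _ _) S0 i isT.
by move/eqP; rewrite powR_eq0 normr_eq0 => /andP[/eqP].
Qed.

Lemma conv_pow (l a b : R) : 0 <= l -> l <= 1 -> 0 <= a -> 0 <= b ->
  (l * a + (1 - l) * b) `^ p <= l * a `^ p + (1 - l) * b `^ p.
Proof.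
move=> l0 l1 a0 b0.
have := @convex_powR R p hp (Itv01 l0 l1) a b.
rewrite !inE /= !in_itv /= !andbT => /(_ a0 b0).
by rewrite !convRE.
Qed.


Lemma lp_tri k (x y : 'I_k -> R) :
  lpnorm p (fun i => x i + y i) <= lpnorm p x + lpnorm p y.
Proof.
have [A0|Apos] : lpnorm p x = 0 \/ 0 < lpnorm p x.
  by move: (lp_ge0 _ x); rewrite le_eqVlt => /orP[/eqP<-|->]; [left|right].
  rewrite A0 add0r; apply: lp_mono => i; by rewrite (lp_eq0 _ _ A0) add0r.
have [B0|Bpos] : lpnorm p y = 0 \/ 0 < lpnorm p y.
  by move: (lp_ge0 _ y); rewrite le_eqVlt => /orP[/eqP<-|->]; [left|right].
  rewrite B0 addr0; apply: lp_mono => i; by rewrite (lp_eq0 _ _ B0) addr0.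
have Hx0 := lp_powp _ x; have Hy0 := lp_powp _ y.
rewrite /lpnorm -/(lpnorm p x) -/(lpnorm p y) in Hx0 Hy0 *.
move: (lpnorm p x) (lpnorm p y) Apos Bpos Hx0 Hy0 => A B Apos Bpos Hx0 Hy0.
have ABpos : 0 < A + B by rewrite addr_gt0.
set l := A / (A + B).
have l0 : 0 <= l by rewrite divr_ge0 // ltW.
have l1 : l <= 1 by rewrite ler_pdivrMr // mul1r lerDl ltW.
have Hx : \sum_(i < k) (`|x i| / A) `^ p = 1.
  under eq_bigr do rewrite powRM ?invr_ge0 ?(ltW Apos) //.
  rewrite -mulr_suml -Hx0 -powRM ?invr_ge0 ?(ltW Apos) //.
  by rewrite mulfV ?gt_eqF // powR1.
have Hy : \sum_(i < k) (`|y i| / B) `^ p = 1.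
  under eq_bigr do rewrite powRM ?invr_ge0 ?(ltW Bpos) //.
  rewrite -mulr_suml -Hy0 -powRM ?invr_ge0 ?(ltW Bpos) //.
  by rewrite mulfV ?gt_eqF // powR1.
have Hi : forall i, `|x i + y i| `^ p <=
    (A + B) `^ p * (l * (`|x i| / A) `^ p + (1 - l) * (`|y i| / B) `^ p).
  move=> i.
  have E : `|x i| + `|y i| = (A + B) * (l * (`|x i| / A) + (1 - l) * (`|y i| / B)).
    have hA : A != 0 by rewrite gt_eqF.
    have hB : B != 0 by rewrite gt_eqF.
    have hAB : A + B != 0 by rewrite gt_eqF.
    by rewrite /l; field; rewrite hA hB hAB.
  apply: (@le_trans _ _ ((`|x i| + `|y i|) `^ p)).
    apply: ge0_ler_powR; [exact: ltW | by rewrite nnegrE | by rewrite nnegrE addr_ge0 | exact: ler_normD].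
  have S0 : 0 <= A + B := ltW ABpos.
  have T0 : 0 <= l * (`|x i| / A) + (1 - l) * (`|y i| / B).
    by rewrite addr_ge0 // mulr_ge0 // ?divr_ge0 // ?subr_ge0 // ltW.
  rewrite E (powRM _ S0 T0).
  rewrite ler_wpM2l ?powR_ge0 //; apply: conv_pow => //; apply: divr_ge0 => //; exact: ltW.
have Hs : \sum_(i < k) `|x i + y i| `^ p <= (A + B) `^ p.
  apply: (le_trans (ler_sum _ (fun i _ => Hi i))).
  rewrite -mulr_sumr big_split /= -!mulr_sumr Hx Hy !mulr1 subrKC mulr1.
  exact: le_refl.
rewrite /lpnorm.
apply: (@le_trans _ _ (((A + B) `^ p) `^ p^-1)).
  apply: ge0_ler_powR => //; rewrite ?invr_ge0 ?ltW ?nnegrE ?powR_ge0 //.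
  by apply: sumr_ge0 => i _; exact: powR_ge0.
by rewrite -powRrM mulfV ?gt_eqF // powRr1 // ltW.
Qed.

End LP.


Section Mass.
Variable R : realType.

Lemma sum_const_pred k (b : 'I_k -> nat) s (c : R) :
  \sum_(i | b i == s) c = c * #|[pred i | b i == s]|%:R.
Proof. by rewrite sumr_const mulr_natr. Qed.

Lemma part_sum k (f : 'I_k -> R) (b : 'I_k -> nat) n (P : pred nat) :
  (forall i, (b i < n.+1)%N) ->
  \sum_(i | P (b i)) f i = \sum_(s < n.+1 | P s) \sum_(i | b i == s) f i.
Proof.
move=> hb.
rewrite (partition_big (fun i => (inord (b i) : 'I_n.+1)) (fun s : 'I_n.+1 => P s)); last first.
  by move=> i Pi; rewrite inordK.
apply: eq_bigr => s Ps; apply: eq_bigl => i.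
rewrite -val_eqE /= inordK //.
by case: eqP => [->|]; rewrite ?Ps ?andbF.
Qed.

Lemma mass k (f : 'I_k -> R) (b : 'I_k -> nat) N (E : pred nat) (dl : R) :
  (forall i, 0 <= f i) -> (forall i, (b i <= N)%N) -> 0 <= dl ->
  (forall s i j, E s -> b i = s -> b j = s.+1 -> f i = f j) ->
  (forall s, E s -> #|[pred i | b i == s]|%:R <= dl * #|[pred i | b i == s.+1]|%:R) ->
  \sum_(i | E (b i)) f i <= dl * \sum_i f i.
Proof.
move=> f0 bN dl0 Hf Hc.
set G := fun s => \sum_(i | b i == s) f i.
have G0 : forall s, 0 <= G s by move=> s; apply: sumr_ge0.
have Hs : forall s, E s -> G s <= dl * G s.+1.
  move=> s Es; rewrite /G.
  case: (pickP (fun i => b i == s)) => [i0 /eqP hi0 | H0]; last first.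
    by rewrite big_pred0 // mulr_ge0 // G0.
  case: (pickP (fun j => b j == s.+1)) => [j0 /eqP hj0 | H1]; last first.
    have := Hc s Es.
    have -> : #|[pred i | b i == s.+1]| = 0%N.
      by apply: eq_card0 => j; rewrite inE H1.
    have : (0 < #|[pred i | b i == s]|)%N.
      by apply/card_gt0P; exists i0; rewrite inE hi0.
    rewrite mulr0 -(ltr_nat R) => h1 h2; have := lt_le_trans h1 h2; by rewrite ltxx.
  rewrite (eq_bigr (fun=> f i0)); last first.
    by move=> i /eqP hi; rewrite (Hf s i j0 Es hi hj0) (Hf s i0 j0 Es hi0 hj0).
  rewrite [X in _ <= _ * X](eq_bigr (fun=> f i0)); last first.
    by move=> j /eqP hj; symmetry; exact: Hf s i0 j Es hi0 hj.
  rewrite !sum_const_pred mulrCA ler_wpM2l //; exact: Hc.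
rewrite (@part_sum _ f b N E); last by move=> i; rewrite ltnS.
rewrite (@part_sum _ f b N.+1 predT); last by move=> i; rewrite ltnS; apply: leq_trans (bN i) _.
apply: (@le_trans _ _ (\sum_(s < N.+1 | E s) dl * G s.+1)).
  by apply: ler_sum => s Es; exact: Hs.
rewrite -mulr_sumr ler_wpM2l //.
rewrite big_ord_recl /= -/(G 0%N) -[X in X <= _]add0r lerD //.
apply: (@le_trans _ _ (\sum_(s < N.+1) G s.+1)).
  by rewrite [X in _ <= X](bigID (fun s : 'I_N.+1 => E s)) /= lerDl sumr_ge0.
by apply: ler_sum => s _; rewrite /G /=.
Qed.

End Mass.


Section More.
Variable R : realType.

Lemma lp_ext (p : R) k (x y : 'I_k -> R) : (forall i, x i = y i) -> lpnorm p x = lpnorm p y.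
Proof. by move=> h; congr lpnorm; apply: boolp.funext. Qed.

Lemma lp_mask (p : R) k (P : pred 'I_k) (x : 'I_k -> R) : 0 < p ->
  lpnorm p (fun i => if P i then x i else 0) = (\sum_(i | P i) `|x i| `^ p) `^ p^-1.
Proof.
move=> p0; rewrite /lpnorm [in RHS]big_mkcond /=. congr (_ `^ _); apply: eq_bigr => i _.
by case: (P i) => //; rewrite normr0 powR0 // gt_eqF.
Qed.

Lemma linf_le k (x : 'I_k -> R) c : 0 <= c -> (forall i, `|x i| <= c) -> linfnorm x <= c.
Proof. by move=> c0 h; apply: bigmax_le. Qed.

Lemma splus_of k d (n : 'I_k -> nat) (i0 : 'I_k) : (0 < d)%N -> (forall i, (n i <= d)%N) -> n i0 = 0%N ->
  Splus_linf (fun i => 1 - (n i)%:R / (d%:R : R)).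
Proof.
move=> d0 hn h0.
have dpos : 0 < (d%:R : R) by rewrite ltr0n.
have H0 : forall i, 0 <= 1 - (n i)%:R / (d%:R : R).
  by move=> i; rewrite subr_ge0 ler_pdivrMr // mul1r ler_nat.
split; last exact: H0.
apply/le_anti/andP; split.
  apply: linf_le => // i; rewrite ger0_norm ?H0 //.
have := @le_bigmax _ _ _ 0 (fun i => `|1 - (n i)%:R / (d%:R : R)|) i0.
by rewrite h0 mul0r subr0 normr1.
Qed.

End More.


Lemma final_ineq (R : realFieldType) (eps rho H gam cN kN L : R) :
  L <= H + gam + `|cN - kN| -> 1 <= H + cN -> cN <= 1 -> 1 <= gam + kN -> kN <= 1 ->
  H <= 2 * (eps / 8 + rho) -> gam <= rho -> rho * 32 <= eps -> 0 <= rho -> 0 <= H -> 0 <= gam ->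
  L <= eps.
Proof.
move=> h1 h2 h3 h4 h5 h6 h7 h8 h9 h10 h11.
have : `|cN - kN| <= H + gam by rewrite ler_norml; apply/andP; split; lra.
lra.
Qed.

Lemma rho_ineq (R : realFieldType) (eps rho : R) : 0 < eps -> 0 <= rho ->
  rho * (32 / eps + 2) <= 1 -> rho * 32 <= eps.
Proof.
move=> e0 r0 h.
have h2 : rho * (32 / eps) <= 1.
  apply: le_trans h; rewrite ler_wpM2l // lerDl; lra.
have -> : rho * 32 = rho * (32 / eps) * eps by field; rewrite gt_eqF.
by rewrite -[X in _ <= X]mul1r ler_wpM2r // ltW.
Qed.


Theorem theorem6p2 (R : realType) (r : R) (d : nat) (eps : R) :
  1 <= r -> (0 < d)%N -> 0 < eps ->
  let a : nat := `|Num.ceil ((32 / eps + 2) `^ r)|%N in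
  forall (m : d.-tuple nat),
    sorted ltn m -> (forall s, s \in m -> Qset a s) ->
  forall (k : nat), Qset a k -> (nth 0%N m d.-1 < k)%N ->
  forall (F : ('I_k -> R) -> ('I_k -> R)),
    (forall x, @Splus_linf R k x -> @Splus_lp R r k (F x)) ->
    step_preserving (@Splus_linf R k) F ->
    (omegaF r F (d%:R^-1) <= (eps / 8)%:E)%E ->
    lpnorm r (fun i => F (@zvec R k d m) i - (k%:R `^ r^-1)^-1) <= eps.
Proof.
move=> r1 d0 eps0 a m msort mQ k kQ mk F FS Fstep Fom.
have r0 : 0 < r by apply: lt_le_trans r1.
have sz : size m = d by rewrite size_tuple.
have X1 : 2 <= 32 / eps + 2.
  have : 0 <= 32 / eps by rewrite divr_ge0 // ltW.
  lra.
have Xr : 32 / eps + 2 <= (32 / eps + 2) `^ r.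
  rewrite -{1}(@powRr1 _ (32 / eps + 2)); last lra.
  by apply: ler_powR => //; lra.
have aR : (32 / eps + 2) `^ r <= a%:R.
  rewrite /a natr_absz ger0_norm; first exact: ceil_ge.
  by rewrite ceil_ge0; apply: lt_le_trans (powR_ge0 _ _); rewrite ltrN10.
have a2 : (2 <= a)%N by rewrite -(ler_nat R); apply: le_trans aR; lra.
have aRpos : 0 < (a%:R : R) by rewrite ltr0n; clear -a2; lia.
have Qgap : forall x y, Qset a x -> Qset a y -> (x < y)%N -> (a * a * x <= y)%N.
  move=> x y [j [j1 ->]] [j' [j1' ->]]; rewrite /kseq => hlt.
  have h : (2 * j - 1 < 2 * j' - 1)%N by rewrite -(ltn_exp2l _ _ (a2 : (1 < a)%N)).
  have -> : (a * a * a ^ (2 * j - 1) = a ^ (2 * j - 1).+2)%N by rewrite !expnS mulnA.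
  by apply: leq_pexp2l; clear -h j1 j1' a2; lia.
have Qpos : forall x, Qset a x -> (0 < x)%N.
  by move=> x [j [_ ->]]; rewrite /kseq expn_gt0; apply/orP; left; clear -a2; lia.
have MQ : forall s, (s <= d)%N -> Qset a (MM k m s).
  move=> s; rewrite leq_eqVlt => /orP[/eqP->|hs]; first by rewrite MMd.
  by apply: mQ; rewrite /MM; apply: mem_nth; rewrite sz.
have Mlt := @M_lt d k m sz msort d0 mk.
have Mmono := @M_mono d k m sz msort d0 mk.
have Mstep : forall s, (s < d)%N -> (a * MM k m s <= MM k m s.+1 - MM k m s)%N.
  move=> s hs; have h1 := Qgap _ _ (MQ s (ltnW hs)) (MQ s.+1 hs) (Mlt s hs).
  by clear -h1 a2; nia.
have M0 : (0 < MM k m 0)%N := Qpos _ (MQ 0%N (leq0n _)).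
have Mk : forall s, (s <= d)%N -> (MM k m s <= k)%N.
  by move=> s hs; rewrite -{2}(@MMd d k m sz); apply: Mmono.
have kpos : (0 < k)%N by move: mk; clear; lia.
pose i0 : 'I_k := Ordinal kpos.
have blk0 : blk m 0 = 0%N := @blk_0 d k m sz msort d0 mk M0.
have blkle : forall i, (blk m i <= d)%N := @blk_le d m sz.
have zE : forall i : 'I_k, @zvec R k d m i = 1 - (blk m i)%:R / d%:R.
  move=> i; rewrite /zvec.
  under eq_bigr => s _ do rewrite (@ind_blk d k m sz msort d0 mk i s (ltn_ord i) (ltn_ord s)).
  case: (ltnP (blk m i) d) => hbd.
    rewrite (bigD1 (Ordinal hbd)) //= eqxx mulr1 big1 ?addr0 // => s hs.
    have : (s : nat) != blk m i.
      by move: hs; apply: contra => /eqP h; apply/eqP/val_inj.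
    by move/negbTE => ->; rewrite mulr0.
  have -> : blk m i = d by apply/eqP; rewrite eqn_leq blkle hbd.
  rewrite big1 ?divff ?subrr ?pnatr_eq0 -?lt0n // => s _.
  by rewrite (ltn_eqF (ltn_ord s)) mulr0.
have zS : Splus_linf (@zvec R k d m).
  have -> : @zvec R k d m = (fun i => 1 - (blk m i)%:R / d%:R) by apply: boolp.funext.
  by apply: (@splus_of R k d (fun i => blk m i) i0).
pose v (p : nat) := fun i : 'I_k => 1 - ((gf p (blk m i))%:R / (d%:R : R)).
have vS : forall p, (p <= 1)%N -> Splus_linf (v p).
  move=> p hp; apply: (@splus_of R k d (fun i => gf p (blk m i)) i0) => //.
    by move=> i /=; exact: (leq_trans (gf_le p _ hp) (blkle i)).
  by rewrite /= blk0 gf_0.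
have dpos : 0 < (d%:R : R) by rewrite ltr0n.
have Hom : forall p, (p <= 1)%N ->
    lpnorm r (fun i => F (@zvec R k d m) i - F (v p) i) <= eps / 8.
  move=> p hp.
  have Hlinf : linfnorm (fun i => @zvec R k d m i - v p i) <= d%:R^-1.
    apply: linf_le; first by rewrite invr_ge0 ler0n.
    move=> i; rewrite zE /v.
    have hg1 := gf_le p (blk m i) hp; have hg2 := gf_ge p (blk m i) hp.
    have -> : 1 - (blk m i)%:R / d%:R - (1 - (gf p (blk m i))%:R / (d%:R : R)) =
        - (((blk m i - gf p (blk m i))%N)%:R / d%:R).
      by rewrite natrB //; ring.
    rewrite normrN ger0_norm ?divr_ge0 ?ler0n //.
    rewrite -[X in _ <= X]mul1r ler_wpM2r ?invr_ge0 ?ler0n //.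
    by rewrite lern1; clear -hg1 hg2; lia.
  suff : ((lpnorm r (fun i => F (@zvec R k d m) i - F (v p) i))%:E <= (eps / 8)%:E)%E.
    by rewrite lee_fin.
  apply: le_trans Fom; apply: ereal_sup_ubound.
  exists (@zvec R k d m), (v p); split; [exact: zS | split; [exact: vS | by split]].
have ainv0 : 0 <= (a%:R : R)^-1 by rewrite invr_ge0 ltW.
have Hmass : forall p, (p <= 1)%N ->
    \sum_(i < k | Ef d p (blk m i)) `|F (v p) i| `^ r <= (a%:R : R)^-1.
  move=> p hp.
  have tot : \sum_(i < k) `|F (v p) i| `^ r = 1.
    by rewrite -(@lp_powp R r r1) (proj1 (FS _ (vS p hp))) powR1.
  apply: (@le_trans _ _ ((a%:R : R)^-1 * \sum_(i < k) `|F (v p) i| `^ r)); last by rewrite tot mulr1.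
  apply: (@mass R k (fun i => `|F (v p) i| `^ r) (fun i => blk m i) d (Ef d p)).
  - by move=> i; exact: powR_ge0.
  - by move=> i; exact: blkle.
  - exact: ainv0.
  - move=> s i j Es hi hj; congr (`|_| `^ r); apply: Fstep; first exact: vS.
    by rewrite /v hi hj (@gf_E d p s hp Es).
  - move=> s Es; have hs := @Ef_lt d p s Es.
    have c1 : (#|[pred i : 'I_k | blk m i == s]| <= MM k m s)%N.
      apply: (@leq_trans #|[pred i : 'I_k | (0 <= i)%N && (i < MM k m s)%N]|).
        apply: subset_leq_card; apply/fintype.subsetP => i; rewrite !inE => /eqP hi /=.
        by rewrite -hi; apply: blk_lt.
      by rewrite card_int ?subn0 //; apply: Mk; exact: ltnW.
    have c2 : (MM k m s.+1 - MM k m s <= #|[pred i : 'I_k | blk m i == s.+1]|)%N.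
      apply: (@leq_trans #|[pred i : 'I_k | (MM k m s <= i)%N && (i < MM k m s.+1)%N]|).
        by rewrite card_int //; [exact: (ltnW (Mlt s hs)) | apply: Mk].
      apply: subset_leq_card; apply/fintype.subsetP => i; rewrite !inE => /andP[h1 h2].
      by apply/eqP; apply: (@blk_int d k m sz msort d0 mk).
    have c3 : (a * #|[pred i : 'I_k | blk m i == s]| <= #|[pred i : 'I_k | blk m i == s.+1]|)%N.
      apply: (@leq_trans (a * MM k m s)); first by rewrite leq_mul2l c1 orbT.
      exact: (leq_trans (Mstep s hs) c2).
    have : ((a * #|[pred i : 'I_k | blk m i == s]|)%:R <= (#|[pred i : 'I_k | blk m i == s.+1]|%:R : R)).
      by rewrite ler_nat.
    rewrite natrM => h.
    rewrite ler_pdivlMl //.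
pose rho := ((a%:R : R)^-1) `^ r^-1.
have rho0 : 0 <= rho by apply: powR_ge0.
have Hpart : forall p, (p <= 1)%N ->
    lpnorm r (fun i => if Ef d p (blk m i) then F (@zvec R k d m) i else 0) <= eps / 8 + rho.
  move=> p hp.
  rewrite (@lp_ext R r k _ (fun i => (if Ef d p (blk m i) then F (@zvec R k d m) i - F (v p) i else 0)
       + (if Ef d p (blk m i) then F (v p) i else 0))); last first.
    by move=> i; case: ifP => _; rewrite ?subrK ?addr0.
  apply: le_trans (@lp_tri R r r1 _ _ _) _; apply: lerD.
    apply: le_trans (Hom p hp); apply: (@lp_mono R r r1) => i.
    by case: ifP => _ //; rewrite normr0 normr_ge0.
  rewrite (@lp_mask R r) //; apply: ge0_ler_powR.
  - by rewrite invr_ge0 ltW.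
  - by rewrite nnegrE; apply: sumr_ge0 => i _; exact: powR_ge0.
  - by rewrite nnegrE.
  - exact: (Hmass p hp).
have uS := FS _ zS.
have hk : (MM k m d.-1 < k)%N.
  by rewrite /MM (set_nth_default 0) ?sz //; clear -d0; lia.
pose it : 'I_k := Ordinal hk.
have ctail : forall i : 'I_k, blk m i = d -> F (@zvec R k d m) i = F (@zvec R k d m) it.
  move=> i hi; apply: (Fstep _ zS i it).
  by rewrite !zE hi /= (@blk_tail d k m sz msort d0 mk).
move: Hpart uS ctail; generalize (F (@zvec R k d m)) => u Hpart uS ctail.
have u0 : forall i, 0 <= u i := (proj2 uS).
have u1 : lpnorm r u = 1 := proj1 uS.
pose H := lpnorm r (fun i => if (blk m i < d)%N then u i else 0).
have HH : H <= 2 * (eps / 8 + rho).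
  rewrite /H (@lp_ext R r k _ (fun i => (if Ef d 0 (blk m i) then u i else 0)
       + (if Ef d 1 (blk m i) then u i else 0))).
    apply: le_trans (@lp_tri R r r1 _ _ _) _.
    by rewrite mulr_natl mulr2n; apply: lerD; [exact: (Hpart 0%N isT) | exact: (Hpart 1%N isT)].
  move=> i; have := Ef_disj d (blk m i); rewrite -Ef_cover.
  by case: (Ef d 0 _); case: (Ef d 1 _); rewrite /= ?addr0 ?add0r.
pose kap := ((k%:R : R) `^ r^-1)^-1.
have kR : 0 < (k%:R : R) by rewrite ltr0n.
have kq : 0 < (k%:R : R) `^ r^-1 by apply: powR_gt0.
have kap0 : 0 <= kap by rewrite invr_ge0 ltW.
pose c := u it.
have c0 : 0 <= c := u0 it.
pose Nt := lpnorm r (fun i : 'I_k => if blk m i == d then (1 : R) else 0).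
have Nt0 : 0 <= Nt by apply: lp_ge0.
have Tc : lpnorm r (fun i : 'I_k => if blk m i == d then u i else 0) = c * Nt.
  rewrite (@lp_ext R r k _ (fun i : 'I_k => c * (if blk m i == d then 1 else 0))); last first.
    by move=> i; case: eqP => h; [rewrite mulr1 ctail | rewrite mulr0].
  by rewrite (@lp_scale R r r1) ger0_norm.
have Tk : lpnorm r (fun i : 'I_k => if blk m i == d then kap else 0) = kap * Nt.
  rewrite (@lp_ext R r k _ (fun i : 'I_k => kap * (if blk m i == d then 1 else 0))); last first.
    by move=> i; case: eqP => h; [rewrite mulr1 | rewrite mulr0].
  by rewrite (@lp_scale R r r1) ger0_norm.
have Tdiff : lpnorm r (fun i : 'I_k => if blk m i == d then u i - kap else 0) = `|c * Nt - kap * Nt|.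
  rewrite (@lp_ext R r k _ (fun i : 'I_k => (c - kap) * (if blk m i == d then 1 else 0))); last first.
    by move=> i; case: eqP => h; [rewrite mulr1 ctail | rewrite mulr0].
  by rewrite (@lp_scale R r r1) -mulrBl normrM (ger0_norm Nt0).
have split_pt : forall (w : 'I_k -> R) i, w i = (if (blk m i < d)%N then w i else 0) + (if blk m i == d then w i else 0).
  move=> w i; case: (ltnP (blk m i) d) => h; first by rewrite (ltn_eqF h) addr0.
  have e : blk m i == d by rewrite eqn_leq blkle h.
  by rewrite e add0r.
have Split1 : 1 <= H + c * Nt.
  rewrite -u1 -Tc /H (@lp_ext R r k u _ (split_pt u)); exact: lp_tri.
have cN1 : c * Nt <= 1.
  rewrite -Tc -u1; apply: (@lp_mono R r r1) => i.
  by case: ifP => _ //; rewrite normr0 normr_ge0.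
have kall : lpnorm r (fun _ : 'I_k => kap) = 1.
  rewrite (@lp_ext R r k _ (fun i : 'I_k => kap * 1)); last by move=> i; rewrite mulr1.
  rewrite (@lp_scale R r r1).
  rewrite (ger0_norm kap0).
  rewrite /lpnorm.
  under eq_bigr do rewrite normr1 powR1 /=.
  by rewrite sumr_const card_ord /kap mulVf // gt_eqF.
pose gam := lpnorm r (fun i : 'I_k => if (blk m i < d)%N then kap else 0).
have gam0 : 0 <= gam by apply: lp_ge0.
have Split2 : 1 <= gam + kap * Nt.
  rewrite -kall -Tk /gam (@lp_ext R r k (fun _ => kap) _ (split_pt (fun _ => kap))); exact: lp_tri.
have kN1 : kap * Nt <= 1.
  rewrite -Tk -kall; apply: (@lp_mono R r r1) => i.
  by case: ifP => _ //; rewrite normr0 normr_ge0.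
have kr : kap `^ r * k%:R = 1.
  have e1 : ((k%:R : R) `^ r^-1) `^ r = k%:R.
    by rewrite -powRrM mulVf ?gt_eqF // powRr1 // ltW.
  rewrite -e1 -powRM ?powR_ge0 //.
  by rewrite /kap mulVf ?gt_eqF // powR1.
have hMd : (a * MM k m d.-1 <= k)%N.
  have h1 := Mstep d.-1 ltac:(clear -d0; lia).
  have h2 : (d.-1.+1 = d)%N by clear -d0; lia.
  rewrite h2 (@MMd d k m sz) in h1.
  by apply: leq_trans h1 _; exact: leq_subr.
have gam_le : gam <= rho.
  rewrite /gam (@lp_mask R r) //; apply: ge0_ler_powR.
  - by rewrite invr_ge0 ltW.
  - by rewrite nnegrE; apply: sumr_ge0 => i _; exact: powR_ge0.
  - by rewrite nnegrE.
  apply: (@le_trans _ _ (\sum_(i < k | (0 <= i)%N && (i < MM k m d.-1)%N) `|kap| `^ r)).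
    rewrite [X in X <= _]big_mkcond [X in _ <= X]big_mkcond /=.
    apply: ler_sum => i _; case: ifP => h1; case: ifP => h2 //=; rewrite ?powR_ge0 //.
    by move: h2; rewrite (@blk_head d k m sz msort d0 mk i (ltn_ord i) h1).
  have -> : \sum_(i < k | (0 <= i)%N && (i < MM k m d.-1)%N) `|kap| `^ r =
      `|kap| `^ r * #|[pred i : 'I_k | (0 <= i)%N && (i < MM k m d.-1)%N]|%:R.
    by rewrite sumr_const mulr_natr.
  rewrite card_int ?subn0 //; last exact: ltnW.
  rewrite ger0_norm //.
  rewrite -[X in _ <= X]mulr1 ler_pdivlMl // mulrCA.
  apply: (@le_trans _ _ (kap `^ r * k%:R)); last by rewrite kr.
  rewrite ler_wpM2l ?powR_ge0 //.
  by rewrite -natrM ler_nat.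
have rho_le : rho * 32 <= eps.
  apply: rho_ineq => //.
  have eX : 32 / eps + 2 = ((32 / eps + 2) `^ r) `^ r^-1.
    by rewrite -powRrM mulfV ?gt_eqF // powRr1 //; apply: le_trans X1; rewrite ler0n.
  rewrite [X in _ * X]eX /rho -powRM //; last exact: powR_ge0.
  have e1 : (1 : R) = 1 `^ r^-1 by rewrite powR1.
  rewrite [X in _ <= X]e1.
  apply: ge0_ler_powR.
  - by rewrite invr_ge0 ltW.
  - by rewrite nnegrE mulr_ge0 ?powR_ge0.
  - by rewrite nnegrE.
  by rewrite ler_pdivrMl // mulr1.
rewrite (@lp_ext R r k _ (fun i : 'I_k => ((if (blk m i < d)%N then u i else 0)
    + - (if (blk m i < d)%N then kap else 0)) + (if blk m i == d then u i - kap else 0))); last first.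
  move=> i; case: (ltnP (blk m i) d) => h; first by rewrite (ltn_eqF h) addr0.
  have e : blk m i == d by rewrite eqn_leq blkle h.
  by rewrite e oppr0 !add0r.
have H0 : 0 <= H by apply: lp_ge0.
refine (@final_ineq R eps rho H gam (c * Nt) (kap * Nt) _ _ Split1 cN1 Split2 kN1 HH gam_le rho_le rho0 H0 gam0).
rewrite -Tdiff.
apply: le_trans (@lp_tri R r r1 _ _ _) _; apply: lerD; last exact: le_refl.
apply: le_trans (@lp_tri R r r1 _ _ _) _; apply: lerD; first exact: le_refl.
by apply: (@lp_mono R r r1) => i; rewrite normrN.
Qed.
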